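(* For every regular matroid $\mathcal M$ (with fixed TU representing matrix $M$), the face poset $\mathcal{FP}^c(\mathcal M)$ of the Voronoi cell at $0$ of the lattice of integer cuts $\Gamma(\mathcal M)$ is isomorphic to the poset $\mathcal{CAC}(\mathcal M)$ of coherent acyclic orientations of submatroids of $\mathcal M$.
   Context: Let $\mathcal M$ be a regular matroid on a finite ground set $E$, represented over $\mathbb R$ by a totally unimodular matrix $M$ with columns $c_e$, $e\in E$; $\mathbb R^E$ has standard basis $\{e\}$ and Euclidean inner product. The lattice of integer cuts is $\Gamma(\mathcal M)=\operatorname{Row}(M)\cap\mathbb Z^E$ with the inherited inner product. Its Voronoi cell at $0$ is $\{x\in\operatorname{Row}(M):\|x\|\le\|x-\mu\|\ \forall\mu\in\Gamma(\mathcal M)\}$, and $\mathcal{FP}^c(\mathcal M)$ is the poset of its nonempty faces ordered by inclusion. An oriented submatroid is a pair $(S,\varepsilon)$ with $S\subseteq E$, $\varepsilon:S\to\{\pm1\}$; let $M^\varepsilon$ be obtained from $M$ by replacing $c_f$ by $\varepsilon_f c_f$ for $f\in S$. $(S,\varepsilon)$ is coherent acyclic if for every $e\in S$ there is $z\in\mathbb Z_{\ge0}^E$ supported in $S$ with $e+z\in\operatorname{Row}(M^\varepsilon)\cap\mathbb Z^E$. $\mathcal{CAC}(\mathcal M)$ is the set of coherent acyclic oriented submatroids ordered by $(S,\varepsilon)\le(S',\varepsilon')$ iff $S'\subseteq S$ and $\varepsilon'=\varepsilon|_{S'}$. *)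

(* Defs.v *)
From HB Require Import structures.
From mathcomp Require Import all_boot all_order all_algebra.
From mathcomp Require Import classical_sets reals.
Set Implicit Arguments. Unset Strict Implicit. Unset Printing Implicit Defensive.
Import Order.TTheory GRing.Theory Num.Theory.
Local Open Scope ring_scope.
Local Open Scope classical_set_scope.

Section Defs.
Variables (R : realType) (m n : nat).
(* Ground set E = 'I_n ; R^E = row vectors 'rV[R]_n ; M : m x n real matrix,
   column c_e = col e M. *)

Definition totally_unimodular (M : 'M[R]_(m, n)) : Prop :=
  forall (k : nat) (f : 'I_k -> 'I_m) (g : 'I_k -> 'I_n),
    \det (mxsub f g M) \in [:: 0; 1; -1].

Definition dotv (x y : 'rV[R]_n) : R := \sum_(i < n) x ord0 i * y ord0 i.
Definition normv (x : 'rV[R]_n) : R := Num.sqrt (dotv x x).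

Definition integral_vec (x : 'rV[R]_n) : Prop := forall i, x ord0 i \is a Num.int.

Definition cut_lattice (M : 'M[R]_(m, n)) : set 'rV[R]_n :=
  [set mu | (mu <= M)%MS /\ integral_vec mu].

Definition voronoi_cell (M : 'M[R]_(m, n)) : set 'rV[R]_n :=
  [set x | (x <= M)%MS /\
           forall mu, cut_lattice M mu -> normv x <= normv (x - mu)].

(* nonempty faces of a convex set V: nonempty intersections of V with a
   supporting hyperplane (a = 0, b = 0 gives V itself) *)
Definition is_face (V F : set 'rV[R]_n) : Prop :=
  F !=set0 /\
  exists (a : 'rV[R]_n) (b : R),
    (forall x, V x -> dotv a x <= b) /\ F = [set x | V x /\ dotv a x = b].

Definition face_poset (M : 'M[R]_(m, n)) :=
  {F : set 'rV[R]_n | is_face (voronoi_cell M) F}.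

(* oriented submatroid (S, eps) encoded as o : E -> option bool :
   S = [set e | o e != None], eps_e = +1 if o e = Some true, -1 if Some false *)
Definition oriented_sub := {ffun 'I_n -> option bool}.

Definition sgn (b : bool) : R := if b then 1 else -1.

Definition reorient (M : 'M[R]_(m, n)) (o : oriented_sub) : 'M[R]_(m, n) :=
  \matrix_(i < m, j < n)
     match o j with Some b => sgn b * M i j | None => M i j end.

Definition coherent_acyclic (M : 'M[R]_(m, n)) (o : oriented_sub) : Prop :=
  forall e : 'I_n, o e != None ->
    exists z : 'I_n -> nat,
      (forall f, o f = None -> z f = 0%N) /\
      let v := \row_(j < n) ((j == e)%:R + (z j)%:R : R) in
      (v <= reorient M o)%MS /\ integral_vec v.

(* (S,eps) <= (S',eps') iff S' ⊆ S and eps' = eps|_{S'} *)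
Definition cac_le (o o' : oriented_sub) : Prop :=
  forall e : 'I_n, o' e != None -> o' e = o e.

Definition CAC (M : 'M[R]_(m, n)) := {o : oriented_sub | coherent_acyclic M o}.

End Defs.

(* Main.v *)
Require Import Defs.
From HB Require Import structures.
From mathcomp Require Import all_boot all_order all_algebra.
From mathcomp Require Import classical_sets reals boolp.
From mathcomp Require Import lra.
Import Order.TTheory GRing.Theory Num.Theory.
Local Open Scope ring_scope.
Local Open Scope classical_set_scope.
Set Implicit Arguments. Unset Strict Implicit. Unset Printing Implicit Defensive.

Section Coord.
Variable R : realType.
Lemma coord (af wf s : R) : wf \in [:: 0; 1; -1] -> (wf != 0 -> af != 0) -> 0 < s ->
  (wf * af < 0 -> s <= `|af|) -> af + s * wf != 0 -> 0 < (af + s * wf) * af.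
Proof.
move=> Hw Hz Hs Hb Hn.
have Hn' : af + s * wf < 0 \/ 0 < af + s * wf.
  case: (ltgtP (af + s * wf) 0) => [h|h|h]; [by left|by right|by rewrite h eqxx in Hn].
move: Hw; rewrite !inE => /or3P [] /eqP Ew; rewrite Ew in Hz Hb Hn' *.
- by case: Hn' => h; nra.
all: have Ha : af != 0 by apply: Hz; rewrite ?oner_eq0 ?oppr_eq0 ?oner_eq0.
all: case: (ltgtP af 0) => [Ha'|Ha'|Ha']; last (by rewrite Ha' eqxx in Ha);
  [rewrite (ltr0_norm Ha') in Hb | rewrite (gtr0_norm Ha') in Hb].
- have : s <= - af by apply: Hb; lra.
  by case: Hn' => h; nra.
- by case: Hn' => h; nra.
- by case: Hn' => h; nra.
- have : s <= af by apply: Hb; lra.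
  by case: Hn' => h; nra.
Qed.

Lemma coord2 (af wf : R) : wf \in [:: 0; 1; -1] -> wf * af < 0 -> af + `|af| * wf = 0.
Proof.
rewrite !inE => /or3P [] /eqP ->; rewrite ?mul0r ?ltxx //.
all: case: (ltgtP af 0) => [Ha|Ha|->]; [rewrite (ltr0_norm Ha)|rewrite (gtr0_norm Ha)|]; move=> h; lra.
Qed.

Lemma coord3 (af wf s : R) : wf \in [:: 0; 1; -1] -> 0 < wf * af -> 0 < s -> af + s * wf != 0.
Proof.
rewrite !inE => /or3P [] /eqP -> h hs; rewrite ?mul0r ?ltxx //.
all: apply/negP => /eqP E; lra.
Qed.

Lemma sign_trans (p q r : R) : 0 < p * q -> 0 < q * r -> 0 < p * r.
Proof. move=> h1 h2; nra. Qed.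
Lemma pm1N (x : R) : x \in [:: 0; 1; -1] -> - x \in [:: 0; 1; -1].
Proof. by rewrite !inE => /or3P [] /eqP ->; rewrite ?oppr0 ?opprK eqxx ?orbT. Qed.

Lemma coordB (af wf t : R) : wf \in [:: 0; 1; -1] -> (wf != 0 -> 0 < wf * af) ->
  (wf != 0 -> t <= `|af|) -> `|af - t * wf| = `|af| - t * `|wf|.
Proof.
rewrite !inE => /or3P [] /eqP -> H1 H2.
- by rewrite normr0 !mulr0 !subr0.
- have h1 : 0 < af by move: (H1 (oner_neq0 _)); rewrite mul1r.
  have := H2 (oner_neq0 _); rewrite (gtr0_norm h1) normr1 !mulr1 => h2.
  by rewrite ger0_norm // subr_ge0.
- have hn : (-1 : R) != 0 by rewrite oppr_eq0 oner_neq0.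
  have h1 : af < 0 by move: (H1 hn); rewrite mulN1r oppr_gt0.
  have := H2 hn; rewrite (ltr0_norm h1) normrN normr1 mulr1 => h2.
  rewrite mulrN1 opprK ler0_norm; first by rewrite opprD.
  lra.
Qed.
Lemma pm1_sq (x : R) : x \in [:: 0; 1; -1] -> x * x = `|x|.
Proof. by rewrite !inE => /or3P [] /eqP ->; rewrite ?mulr0 ?normr0 ?mulr1 ?normr1 ?mulrNN ?mulr1 ?normrN ?normr1. Qed.
Lemma pm1_int (x : R) : x \in [:: 0; 1; -1] -> x \is a Num.int.
Proof. by rewrite !inE => /or3P [] /eqP ->; rewrite ?rpred0 ?rpred1 ?rpredN ?rpred1. Qed.

Lemma int_abs_sq (x : R) : x \is a Num.int -> `|x| <= x * x.
Proof.
move=> Hx; case: (eqVneq x 0) => [->|Hn]; first by rewrite normr0 mulr0.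
have h := norm_intr_ge1 Hx Hn.
rewrite -expr2 -intr_normK // expr2; nra.
Qed.
Lemma term_bound (mu y : R) : mu \is a Num.int -> `|y| <= 1/2 -> 2 * (mu * y) <= mu * mu.
Proof.
move=> Hm Hy; have h1 := int_abs_sq Hm.
have h2 : mu * y <= `|mu| * `|y| by rewrite -normrM ler_norm.
have h3 : `|mu| * `|y| <= `|mu| * (1/2) by rewrite ler_wpM2l.
lra.
Qed.

Lemma gnn (af' u : R) : `|u| <= 1/2 -> 0 <= `|af'| / 2 - af' * u.
Proof.
move=> hu; have h1 : af' * u <= `|af'| * `|u| by rewrite -normrM ler_norm.
have h2 : `|af'| * `|u| <= `|af'| * (1/2) by rewrite ler_wpM2l.
lra.
Qed.

Lemma gpos (af af' : R) : af' != 0 -> ~~ ((af != 0) && ((0 < af) == (0 < af'))) ->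
  0 < `|af'| / 2 - af' * ((if af != 0 then Num.sg af else - Num.sg af') / 2).
Proof.
move=> H1 H2.
case: (ltgtP af' 0) => [h'|h'|h']; last by rewrite h' eqxx in H1.
- case: (ltgtP af 0) => [h|h|h].
  + by move: H2; rewrite (ltr0_neq0 h) (lt_gtF h) (lt_gtF h').
  + rewrite (ltr0_norm h') /= (gtr0_sg h); lra.
  + rewrite /= (ltr0_norm h') (ltr0_sg h'); lra.
- case: (ltgtP af 0) => [h|h|h].
  + rewrite (gtr0_norm h') /= (ltr0_sg h); lra.
  + by move: H2; rewrite (lt0r_neq0 h) h h'.
  + rewrite /= (gtr0_norm h') (gtr0_sg h'); lra.
Qed.

Lemma coordC (af af' t : R) : (af' != 0 -> af != 0 /\ (0 < af) = (0 < af')) ->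
  0 <= t -> t * `|af'| <= `|af| -> `|af - t * af'| = `|af| - t * `|af'|.
Proof.
move=> H Ht Hb.
case: (ltgtP af' 0) => [h'|h'|h'].
- have [H1 H2] := H (ltr0_neq0 h').
  have h : af < 0 by move: H2; rewrite (ltNge 0 af') (ltW h') /= => /negbT; rewrite -leNgt le_eqVlt (negbTE H1).
  rewrite (ltr0_norm h') (ltr0_norm h) in Hb *.
  rewrite ler0_norm; first by lra.
  nra.
- have [H1 H2] := H (lt0r_neq0 h').
  have h : 0 < af by rewrite H2.
  rewrite (gtr0_norm h') (gtr0_norm h) in Hb *.
  rewrite ger0_norm; first by lra.
  nra.
- by rewrite h' normr0 !mulr0 !subr0.
Qed.

Lemma coordD (wf af : R) : wf \in [:: 0; 1; -1] -> wf != 0 -> 0 < wf * af ->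
  wf * sgn R (0 < af) = 1.
Proof.
rewrite !inE => /or3P [] /eqP -> Hw Hp; first by rewrite eqxx in Hw.
- by move: Hp; rewrite mul1r => ->; rewrite /sgn mulr1.
- move: Hp; rewrite mulN1r oppr_gt0 => Hp.
  by rewrite (lt_gtF Hp) /sgn mulrNN mulr1.
Qed.
End Coord.

Section Main.
Variables (R : realType) (m n : nat) (M : 'M[R]_(m, n)).
Hypothesis HTU : totally_unimodular M.

Implicit Types (a b x y u w : 'rV[R]_n).

Lemma dotvDl a b x : dotv (a + b) x = dotv a x + dotv b x.
Proof. by rewrite /dotv -big_split; apply: eq_bigr => i _; rewrite mxE mulrDl. Qed.
Lemma dotvZl (t : R) a x : dotv (t *: a) x = t * dotv a x.
Proof. by rewrite /dotv mulr_sumr; apply: eq_bigr => i _; rewrite mxE mulrA. Qed.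
Lemma dotvC a x : dotv a x = dotv x a.
Proof. by rewrite /dotv; apply: eq_bigr => i _; rewrite mulrC. Qed.
Lemma dotvNl a x : dotv (- a) x = - dotv a x.
Proof. by rewrite -scaleN1r dotvZl mulN1r. Qed.
Lemma dotvBl a b x : dotv (a - b) x = dotv a x - dotv b x.
Proof. by rewrite dotvDl dotvNl. Qed.
Lemma dotvDr a b x : dotv x (a + b) = dotv x a + dotv x b.
Proof. by rewrite dotvC dotvDl !(dotvC x). Qed.
Lemma dotvBr a b x : dotv x (a - b) = dotv x a - dotv x b.
Proof. by rewrite dotvC dotvBl !(dotvC x). Qed.
Lemma dotv_ge0 x : 0 <= dotv x x.
Proof. by apply: sumr_ge0 => i _; rewrite -expr2 sqr_ge0. Qed.
Lemma dotv_mx a x : dotv a x = (a *m x^T) 0 0.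
Proof. by rewrite /dotv !mxE; apply: eq_bigr => i _; rewrite mxE. Qed.
Lemma dotv0l x : dotv 0 x = 0.
Proof. by rewrite /dotv big1 // => i _; rewrite mxE mul0r. Qed.

Lemma cap_ker_0 (v : 'rV[R]_n) : (v <= M)%MS -> (v <= kermx M^T)%MS -> v = 0.
Proof.
move=> /submxP [z ->] /sub_kermxP H.
have H0 : dotv (z *m M) (z *m M) = 0.
  by rewrite dotv_mx trmx_mul mulmxA H mul0mx mxE.
apply/rowP => j; rewrite [RHS]mxE.
have Hs := psumr_eq0P _ H0.
have : (z *m M) 0 j * (z *m M) 0 j = 0.
  apply: Hs => // i _; by rewrite -expr2 sqr_ge0.
by move/eqP; rewrite mulf_eq0 orbb => /eqP.
Qed.

Lemma orth_ker (a v : 'rV[R]_n) : (a <= M)%MS -> (v <= kermx M^T)%MS -> dotv a v = 0.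
Proof.
move=> /submxP [z ->] /sub_kermxP H.
have E : M *m v^T = (v *m M^T)^T by rewrite trmx_mul trmxK.
by rewrite dotv_mx -mulmxA E H trmx0 mulmx0 mxE.
Qed.

Lemma capMK0 : (M :&: kermx M^T)%MS = 0.
Proof.
apply/matrixP => i j; rewrite [RHS]mxE.
have -> : (M :&: kermx M^T)%MS i j = row i (M :&: kermx M^T)%MS 0 j by rewrite mxE.
rewrite (@cap_ker_0 (row i (M :&: kermx M^T)%MS)) ?mxE //.
  exact: submx_trans (row_sub _ _) (capmxSl _ _).
exact: submx_trans (row_sub _ _) (capmxSr _ _).
Qed.

Lemma proj_ex (y : 'rV[R]_n) : exists p, (p <= M)%MS /\ (y - p <= kermx M^T)%MS.
Proof.
have full : (1%:M <= M + kermx M^T)%MS.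
  rewrite sub1mx /row_full.
  have := mxrank_sum_cap M (kermx M^T).
  rewrite capMK0 mxrank0 addn0 mxrank_ker mxrank_tr => ->.
  by rewrite subnKC // rank_leq_col.
have : (y <= M + kermx M^T)%MS by apply: submx_trans full; apply: submx1.
case/sub_addsmxP => u ->.
exists (u.1 *m M); split; first exact: submxMl.
by rewrite addrC addKr submxMl.
Qed.


Definition ext k (T : Type) (d : 'I_k -> T) (j : T) : 'I_k.+1 -> T :=
  fun t => if unlift ord_max t is Some t' then d t' else j.

Lemma ext_max k T (d : 'I_k -> T) j : ext d j ord_max = j.
Proof. by rewrite /ext unlift_none. Qed.
Lemma ext_lift k T (d : 'I_k -> T) j t : ext d j (lift ord_max t) = d t.
Proof. by rewrite /ext liftK. Qed.

Lemma det_ext_col k (f : 'I_k.+1 -> 'I_m) (d : 'I_k -> 'I_n) j :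
  \det (mxsub f (ext d j) M) =
  \sum_i M (f i) j * ((-1) ^+ (i + (@ord_max k)) * \det (row' i (mxsub f d M))).
Proof.
rewrite (expand_det_col _ ord_max); apply: eq_bigr => i _.
rewrite /cofactor !mxE ext_max; congr (_ * (_ * \det _)).
by apply/matrixP => a b; rewrite !mxE ext_lift.
Qed.

Lemma det_ext_row k (f : 'I_k -> 'I_m) i (h : 'I_k.+1 -> 'I_n) :
  \det (mxsub (ext f i) h M) =
  \sum_t M i (h t) * ((-1) ^+ ((@ord_max k) + t) * \det (col' t (mxsub f h M))).
Proof.
rewrite (expand_det_row _ ord_max); apply: eq_bigr => t _.
rewrite /cofactor !mxE ext_max; congr (_ * (_ * \det _)).
by apply/matrixP => a b; rewrite !mxE ext_lift.
Qed.

Definition lapv k (f : 'I_k.+1 -> 'I_m) (d : 'I_k -> 'I_n) : 'rV[R]_n :=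
  \row_j \det (mxsub f (ext d j) M).

Lemma lapv_sub k (f : 'I_k.+1 -> 'I_m) (d : 'I_k -> 'I_n) : (lapv f d <= M)%MS.
Proof.
have -> : lapv f d = \sum_(i < k.+1) ((-1) ^+ (i + (@ord_max k)) * \det (row' i (mxsub f d M))) *: row (f i) M.
  apply/rowP => j; rewrite mxE det_ext_col summxE; apply: eq_bigr => i _.
  by rewrite !mxE mulrC.
by apply: summx_sub => i _; apply: scalemx_sub; apply: row_sub.
Qed.

Lemma det_inj k (f : 'I_k -> 'I_m) (g : 'I_k -> 'I_n) :
  \det (mxsub f g M) != 0 -> (k <= m)%N.
Proof.
move=> H; suff /leq_card : injective f by rewrite !card_ord.
move=> i1 i2 E; apply/eqP; apply: contraNT H => Hne; apply/eqP.
by apply: (determinant_alternate Hne) => j; rewrite !mxE E.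
Qed.


Definition pm1 (w : 'rV[R]_n) := forall j, w 0 j \in [:: 0; 1; -1].

Lemma L_step (y : 'rV[R]_m) e N : (y *m M) 0 e != 0 -> forall k (f : 'I_k.+1 -> 'I_m) (d : 'I_k -> 'I_n),
  (m - k <= N)%N -> (forall t, (y *m M) 0 (d t) = 0) ->
  \det (mxsub f (ext d e) M) != 0 ->
  exists w, [/\ (w <= M)%MS, pm1 w, w 0 e != 0 &
                forall j, (y *m M) 0 j = 0 -> w 0 j = 0].
Proof.
set c := y *m M => Hce.
elim: N => [|N IH] k f d Hk Hd Hdet.
  have H1 := det_inj Hdet; move: Hk; rewrite leqn0 subn_eq0 => Hmk.
  by have := leq_trans H1 Hmk; rewrite ltnn.
case: (boolP [forall j, (c 0 j == 0) ==> (\det (mxsub f (ext d j) M) == 0)]) => Hall.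
  exists (lapv f d); split.
  - exact: lapv_sub.
  - by move=> j; rewrite mxE; apply: HTU.
  - by rewrite mxE.
  - move=> j Hj; rewrite mxE; apply/eqP.
    by move/forallP: Hall => /(_ j) /implyP; apply; apply/eqP.
move: Hall; rewrite negb_forall => /existsP [j]; rewrite negb_imply => /andP [/eqP Hcj Hdj].
set h := ext (ext d j) e.
have [i Hi] : exists i, \det (mxsub (ext f i) h M) != 0.
  case: (boolP [exists i, \det (mxsub (ext f i) h M) != 0]) => [/existsP //|].
  rewrite negb_exists => /forallP Hz; exfalso.
  set kap := fun t : 'I_k.+2 => (-1) ^+ ((@ord_max k.+1) + t) * \det (col' t (mxsub f h M)).
  have H0 : forall i, \sum_t M i (h t) * kap t = 0.
    by move=> i; rewrite -det_ext_row; apply/eqP; have := Hz i; rewrite negbK.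
  have H1 : \sum_(i < m) y 0 i * (\sum_t M i (h t) * kap t) = \sum_t kap t * c 0 (h t).
    rewrite (eq_bigr (fun i => \sum_t y 0 i * (M i (h t) * kap t))); last first.
      by move=> i _; rewrite mulr_sumr.
    rewrite exchange_big; apply: eq_bigr => t _.
    rewrite /c mxE mulr_sumr; apply: eq_bigr => i _.
    by rewrite [RHS]mulrC mulrA.
  have H2 : \sum_t kap t * c 0 (h t) = kap ord_max * c 0 e.
    rewrite (bigD1 ord_max) //= big1 ?addr0 /h ?ext_max // => t Ht.
    case: (unliftP (@ord_max k.+1) t) => [t' Et|Et]; last by rewrite Et eqxx in Ht.
    rewrite Et ext_lift /ext.
    by case: (unlift ord_max t') => [t''|]; rewrite ?Hd ?Hcj mulr0.
  have H3 : kap ord_max * c 0 e != 0.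
    apply: mulf_neq0 => //; rewrite /kap; apply: mulf_neq0; first by rewrite signr_eq0.
    suff -> : col' ord_max (mxsub f h M) = mxsub f (ext d j) M by [].
    by apply/matrixP => a b; rewrite !mxE /h ext_lift.
  by move: H3; rewrite -H2 -H1 big1 ?eqxx // => i _; rewrite H0 mulr0.
apply: (IH k.+1 (ext f i) (ext d j)) => //.
- by rewrite subnS; move: Hk; case: (m - k)%N.
- move=> t; rewrite /ext; case: (unlift ord_max t) => [t'|] //; exact: Hd.
Qed.


Lemma L_main (y : 'rV[R]_m) e : (y *m M) 0 e != 0 ->
  exists w, [/\ (w <= M)%MS, pm1 w, w 0 e != 0 &
                forall j, (y *m M) 0 j = 0 -> w 0 j = 0].
Proof.
move=> Hce.
have [i0 Hi0] : exists i, M i e != 0.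
  case: (boolP [exists i, M i e != 0]) => [/existsP //|].
  rewrite negb_exists => /forallP Hz; exfalso; move: Hce; rewrite mxE big1 ?eqxx //.
  by move=> i _; move: (Hz i); rewrite negbK => /eqP ->; rewrite mulr0.
pose f := fun _ : 'I_1 => i0.
pose d := fun _ : 'I_0 => e.
apply: (@L_step y e m Hce 0 f d) => //; first by rewrite subn0.
  by case.
rewrite det_ext_col big_ord1 det_mx00 mulr1 expr0 mulr1.
exact: Hi0.
Qed.


Lemma exists_min (I : finType) (P : pred I) (F : I -> R) i0 : P i0 ->
  exists i, P i /\ forall j, P j -> F i <= F j.
Proof. move=> Pi0. case: (arg_minP F Pi0) => i Pi Hi. by exists i. Qed.

Definition supp (a : 'rV[R]_n) : {set 'I_n} := [set f | a 0 f != 0].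

Lemma K_main (N : nat) : forall a, (a <= M)%MS -> (#|supp a| <= N)%N ->
  forall e, a 0 e != 0 ->
  exists w, [/\ (w <= M)%MS, pm1 w, w 0 e != 0 & forall f, w 0 f != 0 -> 0 < w 0 f * a 0 f].
Proof.
elim: N => [|N IH] a Ha Hc e He.
  have : (0 < #|supp a|)%N by apply/card_gt0P; exists e; rewrite inE.
  by move: Hc; rewrite leqn0 => /eqP ->.
have [y Ey] := submxP Ha.
have He' : (y *m M) 0 e != 0 by rewrite -Ey.
have [w0 [S0 P0 E0 Z0]] := L_main He'.
rewrite -Ey in Z0.
have [w1 [S1 P1 E1 Z1]] : exists w1, [/\ (w1 <= M)%MS, pm1 w1, 0 < w1 0 e * a 0 e &
     forall j, a 0 j = 0 -> w1 0 j = 0].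
  have Hne : w0 0 e * a 0 e != 0 by rewrite mulf_neq0.
  case: (ltgtP (w0 0 e * a 0 e) 0) => [Hl|Hg|Heq]; last by rewrite Heq eqxx in Hne.
    exists (- w0); split.
    - by rewrite -scaleN1r scalemx_sub.
    - by move=> j; rewrite mxE pm1N.
    - by rewrite mxE mulNr oppr_gt0.
    - by move=> j Hj; rewrite mxE Z0 ?oppr0.
  by exists w0.
have Z1' : forall f, w1 0 f != 0 -> a 0 f != 0.
  by move=> f; apply: contraNneq => /Z1 ->.
case: (boolP [forall f, (w1 0 f != 0) ==> (0 < w1 0 f * a 0 f)]) => Hall.
  exists w1; split => //.
    by apply: contraTneq E1 => ->; rewrite mul0r ltxx.
  by move=> f Hf; move/forallP: Hall => /(_ f) /implyP; apply.
move: Hall; rewrite negb_forall => /existsP [f0]; rewrite negb_imply => /andP [Hw0 Hp0].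
have bad0 : w1 0 f0 * a 0 f0 < 0.
  move: Hp0; rewrite -leNgt le_eqVlt mulf_eq0 (negbTE Hw0) (negbTE (Z1' _ Hw0)) /=.
  by [].
have [fm [Pfm Hmin]] := @exists_min _ (fun f => w1 0 f * a 0 f < 0) (fun f => `|a 0 f|) f0 bad0.
have Hafm : a 0 fm != 0 by apply: contraTneq Pfm => ->; rewrite mulr0 ltxx.
set s := `|a 0 fm|.
have Hs : 0 < s by rewrite normr_gt0.
set a2 := a + s *: w1.
have Ea2 : forall f, a2 0 f = a 0 f + s * w1 0 f by move=> f; rewrite !mxE.
have Sa2 : (a2 <= M)%MS by rewrite addmx_sub // scalemx_sub.
have Hconf : forall f, a2 0 f != 0 -> 0 < a2 0 f * a 0 f.
  move=> f; rewrite Ea2; apply: coord => //; first exact: Z1'.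
  exact: Hmin.
have Hfm : a2 0 fm = 0 by rewrite Ea2; apply: coord2.
have He2 : a2 0 e != 0 by rewrite Ea2; apply: coord3.
have Hcard : (#|supp a2| <= N)%N.
  have Hsub : supp a2 \subset supp a :\ fm.
    apply/fintype.subsetP => f; rewrite /supp !inE => Hf; apply/andP; split.
      by apply: contraNneq Hf => ->; rewrite Hfm.
    have := Hconf f Hf; apply: contraTneq => ->; by rewrite mulr0 ltxx.
  have := subset_leq_card Hsub.
  move: Hc; rewrite (cardsD1 fm (supp a)) /supp inE Hafm add1n ltnS.
  by move=> H1 H2; apply: leq_trans H2 H1.
have [w [S P E Cf]] := IH a2 Sa2 Hcard e He2.
exists w; split => // f Hf.
have Hp := Cf f Hf.
have Ha2 : a2 0 f != 0 by apply: contraTneq Hp => ->; rewrite mulr0 ltxx.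
exact: sign_trans Hp (Hconf f Ha2).
Qed.

Definition l1 (a : 'rV[R]_n) := \sum_f `|a 0 f|.

Lemma vor_dot x w : voronoi_cell M x -> cut_lattice M w -> 2 * dotv w x <= dotv w w.
Proof.
move=> [_ Hv] Hw; have := Hv w Hw; rewrite /normv ler_sqrt ?dotv_ge0 //.
rewrite !dotvBl !dotvBr (dotvC x w) => h; lra.
Qed.

Lemma pm1_cut w : (w <= M)%MS -> pm1 w -> cut_lattice M w.
Proof. by move=> Hs Hp; split => // i; apply: pm1_int. Qed.

Lemma pm1_l1 w : pm1 w -> dotv w w = l1 w.
Proof. by move=> Hp; apply: eq_bigr => i _; apply: pm1_sq. Qed.

Lemma B_zero a x : (forall f, a 0 f = 0) -> dotv a x <= l1 a / 2.
Proof.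
move=> Hz; rewrite /dotv /l1 !big1 ?mul0r // => i _; rewrite Hz ?normr0 ?mul0r //.
Qed.

Lemma B_main (N : nat) : forall a, (a <= M)%MS -> (#|supp a| <= N)%N ->
  forall x, voronoi_cell M x -> dotv a x <= l1 a / 2.
Proof.
elim: N => [|N IH] a Ha Hc x Hx.
  apply: B_zero => f; apply/eqP; apply: contraT => Hf.
  have : (0 < #|supp a|)%N by apply/card_gt0P; exists f; rewrite inE.
  by move: Hc; rewrite leqn0 => /eqP ->.
case: (boolP [exists e, a 0 e != 0]) => [/existsP [e He]|]; last first.
  rewrite negb_exists => /forallP Hz; apply: B_zero => f.
  by apply/eqP; move: (Hz f); rewrite negbK.
have [w [Sw Pw Ew Cw]] := @K_main #|supp a| a Ha (leqnn _) e He.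
have [fm [Pfm Hmin]] := @exists_min _ (fun f => w 0 f != 0) (fun f => `|a 0 f|) e Ew.
have Hafm : a 0 fm != 0.
  by have := Cw fm Pfm; apply: contraTneq => ->; rewrite mulr0 ltxx.
set t := `|a 0 fm|.
have Ht : 0 < t by rewrite normr_gt0.
set a1 := a - t *: w.
have Ea1 : forall f, a1 0 f = a 0 f - t * w 0 f by move=> f; rewrite !mxE.
have Sa1 : (a1 <= M)%MS by rewrite addmx_sub // -scaleNr scalemx_sub.
have Na1 : forall f, `|a1 0 f| = `|a 0 f| - t * `|w 0 f|.
  move=> f; rewrite Ea1; apply: coordB => //; first exact: Cw.
  exact: Hmin.
have Hcard : (#|supp a1| <= N)%N.
  have Hsub : supp a1 \subset supp a :\ fm.
    apply/fintype.subsetP => f; rewrite /supp !inE => Hf; apply/andP; split.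
      have Hw1 : `|w 0 fm| = 1.
        by move: (Pw fm) Pfm; rewrite !inE => /or3P [] /eqP ->; rewrite ?eqxx // ?normrN normr1.
      by apply: contraNneq Hf => ->; rewrite -normr_eq0 Na1 Hw1 mulr1 subrr.
    apply: contraNneq Hf => Ha0; rewrite Ea1 Ha0.
    have -> : w 0 f = 0.
      by apply/eqP; apply: contraT => Hwf; have := Cw f Hwf; rewrite Ha0 mulr0 ltxx.
    by rewrite mulr0 subr0.
  move: Hc; rewrite (cardsD1 fm (supp a)) /supp inE Hafm add1n ltnS.
  by move=> H1; apply: leq_trans (subset_leq_card Hsub) H1.
have IH1 := IH a1 Sa1 Hcard x Hx.
have Hl1 : l1 a1 = l1 a - t * l1 w.
  by rewrite /l1 (eq_bigr _ (fun f _ => Na1 f)) sumrB mulr_sumr.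
have Hd : dotv a x = dotv a1 x + t * dotv w x.
  by rewrite /a1 dotvBl dotvZl addrNK.
have Hw2 : 2 * dotv w x <= l1 w.
  by rewrite -pm1_l1 //; apply: vor_dot => //; apply: pm1_cut.
have Hw3 : t * (2 * dotv w x) <= t * l1 w by rewrite ler_wpM2l // ltW.
rewrite Hd; rewrite Hl1 in IH1; lra.
Qed.

Lemma E_main y p : (forall f, `|y 0 f| <= 1/2) -> (p <= M)%MS ->
  (y - p <= kermx M^T)%MS -> voronoi_cell M p.
Proof.
move=> Hy Hp Hk; split => // mu [Hmu Hint].
rewrite /normv ler_sqrt ?dotv_ge0 //.
have Hd : dotv mu p = dotv mu y.
  by have := orth_ker Hmu Hk; rewrite dotvBr => /eqP; rewrite subr_eq0 => /eqP ->.
have H2 : 2 * dotv mu y <= dotv mu mu.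
  rewrite /dotv mulr_sumr; apply: ler_sum => f _; exact: term_bound.
rewrite !dotvBl !dotvBr (dotvC p mu) Hd; lra.
Qed.

Definition ypt a a' : 'rV[R]_n :=
  \row_f ((if a 0 f != 0 then Num.sg (a 0 f) else - Num.sg (a' 0 f)) / 2).

Lemma ypt_bound a a' f : `|ypt a a' 0 f| <= 1/2.
Proof.
rewrite mxE; set X := (if _ then _ else _).
have h : `|X| <= 1.
  by rewrite /X; case: ifP => _; rewrite ?normrN normr_sg; case: (_ != 0).
rewrite normrM normfV (ger0_norm (ler0n _ 2)); lra.
Qed.

Lemma ypt_dot a a' : dotv a (ypt a a') = l1 a / 2.
Proof.
rewrite /dotv /l1 mulr_suml; apply: eq_bigr => f _; rewrite mxE.
case: ifP => [Hf|/negbFE/eqP ->]; last by rewrite mul0r normr0 mul0r.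
by rewrite mulrA [_ * Num.sg _]mulrC -normrEsg.
Qed.

Lemma pt_ex a a' : exists p, voronoi_cell M p /\
  forall b, (b <= M)%MS -> dotv b p = dotv b (ypt a a').
Proof.
have [p [Hp Hk]] := proj_ex (ypt a a').
exists p; split; first exact: (E_main (@ypt_bound a a')).
move=> b Hb; have := orth_ker Hb Hk; rewrite dotvBr => /eqP; rewrite subr_eq0 => /eqP ->.
by [].
Qed.

Definition faceset a : set 'rV[R]_n := [set x | voronoi_cell M x /\ dotv a x = l1 a / 2].
Definition signpat a : oriented_sub n := [ffun f => if a 0 f == 0 then None else Some (0 < a 0 f)].

Lemma signpatE a a' f : a' 0 f != 0 -> signpat a' f = signpat a f ->
  a 0 f != 0 /\ (0 < a 0 f) = (0 < a' 0 f).
Proof.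
move=> H; rewrite !ffunE (negbTE H); case: eqP => // Ha [E]; split; first by apply/eqP.
by rewrite E.
Qed.

Lemma B_any a x : (a <= M)%MS -> voronoi_cell M x -> dotv a x <= l1 a / 2.
Proof. by move=> Ha Hx; apply: (@B_main #|supp a|). Qed.

Lemma faceO a a' : (a <= M)%MS -> (a' <= M)%MS ->
  (faceset a `<=` faceset a') <-> cac_le (signpat a) (signpat a').
Proof.
move=> Ha Ha'; split.
  move=> Hsub e He'.
  have Ha'e : a' 0 e != 0 by move: He'; rewrite ffunE; case: (eqVneq (a' 0 e) 0).
  case: (boolP ((a 0 e != 0) && ((0 < a 0 e) == (0 < a' 0 e)))) => Hc.
    move/andP: Hc => [Hae /eqP Hs].
    by rewrite !ffunE (negbTE Ha'e) (negbTE Hae) Hs.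
  exfalso.
  have [p [Vp Hp]] := pt_ex a a'.
  have Fa : faceset a p by split => //; rewrite Hp // ypt_dot.
  have [_ Hd] := Hsub p Fa; rewrite Hp // in Hd.
  pose g f := `|a' 0 f| / 2 - a' 0 f * ypt a a' 0 f.
  have Hg0 : \sum_f g f = 0.
    by rewrite sumrB -mulr_suml -/(l1 a') -/(dotv a' _) Hd subrr.
  have Hge : forall f, 0 <= g f by move=> f; apply: gnn; apply: ypt_bound.
  have := @psumr_eq0P _ _ predT g (fun f _ => Hge f) Hg0 e isT.
  move/eqP; apply/negP; rewrite /g mxE; apply: lt0r_neq0; exact: gpos.
move=> Hle x [Vx Hx]; split => //.
have Hrel : forall f, a' 0 f != 0 -> a 0 f != 0 /\ (0 < a 0 f) = (0 < a' 0 f).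
  move=> f Hf; apply: signpatE => //; apply: Hle.
  by rewrite ffunE (negbTE Hf).
apply/eqP; rewrite eq_le B_any //=.
pose q f := if a 0 f == 0 then 0 else `|a' 0 f| / `|a 0 f|.
have Hq : forall f, 0 <= q f.
  by move=> f; rewrite /q; case: eqP => // _; rewrite divr_ge0.
set S := \sum_f q f.
have HS : 0 <= S by apply: sumr_ge0.
set t := (1 + S)^-1.
have Ht : 0 < t by rewrite invr_gt0; lra.
have HtS : t * (1 + S) = 1 by rewrite mulVf //; apply: lt0r_neq0; lra.
have Htb : forall f, t * `|a' 0 f| <= `|a 0 f|.
  move=> f; case: (eqVneq (a' 0 f) 0) => [->|Hf]; first by rewrite normr0 mulr0.
  have [Haf _] := Hrel f Hf.
  have Hqf : q f <= S by rewrite /S (bigD1 f) //= lerDl sumr_ge0.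
  have E : `|a' 0 f| = q f * `|a 0 f|.
    by rewrite /q (negbTE Haf) mulfVK // normr_eq0.
  have Hna : 0 < `|a 0 f| by rewrite normr_gt0.
  have h1 : t * q f <= 1 by rewrite -HtS ler_wpM2l ?ltW //; lra.
  rewrite E mulrA -[X in _ <= X]mul1r; apply: ler_wpM2r => //; exact: ltW.
set b := a - t *: a'.
have Sb : (b <= M)%MS by rewrite addmx_sub // -scaleNr scalemx_sub.
have Nb : forall f, `|b 0 f| = `|a 0 f| - t * `|a' 0 f|.
  move=> f; rewrite !mxE; apply: coordC => //; [exact: Hrel | exact: ltW].
have Hl1 : l1 b = l1 a - t * l1 a'.
  by rewrite /l1 (eq_bigr _ (fun f _ => Nb f)) sumrB mulr_sumr.
have Hd : dotv b x = dotv a x - t * dotv a' x by rewrite /b dotvBl dotvZl.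
have := B_any Sb Vx; rewrite Hd Hl1 Hx => h.
nra.
Qed.

Definition dvec (o : oriented_sub n) : 'rV[R]_n :=
  \row_j (match o j with Some b => sgn R b | None => 1 end).

Lemma dvec_sq (o : oriented_sub n) j : dvec o 0 j * dvec o 0 j = 1.
Proof. by rewrite mxE; case: (o j) => [[]|]; rewrite /sgn ?mulr1 ?mulrNN ?mulr1. Qed.

Lemma reorientE (o : oriented_sub n) : reorient M o = M *m diag_mx (dvec o).
Proof.
rewrite mul_mx_diag; apply/matrixP => i j; rewrite !mxE.
by case: (o j) => [b|]; rewrite ?mulr1 // mulrC.
Qed.

Lemma reorientK (o : oriented_sub n) : reorient M o *m diag_mx (dvec o) = M.
Proof.
rewrite reorientE !mul_mx_diag; have Hd := dvec_sq o; move: (dvec o) Hd => d Hd; apply/matrixP => i j; rewrite !mxE.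
by rewrite -mulrA Hd mulr1.
Qed.

Lemma cov_cac a : (a <= M)%MS -> coherent_acyclic M (signpat a).
Proof.
move=> Ha e He.
have Hae : a 0 e != 0 by move: He; rewrite ffunE; case: (eqVneq (a 0 e) 0).
have [w [Sw Pw Ew Cw]] := @K_main #|supp a| a Ha (leqnn _) e Hae.
have Zw : forall f, a 0 f = 0 -> w 0 f = 0.
  by move=> f Hf; apply/eqP; apply: contraT => Hwf; have := Cw f Hwf; rewrite Hf mulr0 ltxx.
exists (fun j => if j == e then 0%N else nat_of_bool (w 0 j != 0)); split.
  move=> f; rewrite ffunE; case: (eqVneq (a 0 f) 0) => [Hf _|//].
  by rewrite (Zw f Hf); case: (f == e) => //=; rewrite eqxx.
cbv zeta.
set v := \row_j _.
have Ev : v = w *m diag_mx (dvec (signpat a)).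
  rewrite mul_mx_diag; apply/rowP => j; rewrite !mxE ffunE.
  case: (eqVneq j e) => [->|Hje].
    rewrite addr0 (negbTE Hae).
    by rewrite (coordD (Pw e) Ew (Cw e Ew)).
  rewrite /= add0r.
  case: (eqVneq (w 0 j) 0) => [->|Hwj]; first by rewrite mul0r.
  have Haj : a 0 j != 0 by apply: contraNneq Hwj => /Zw ->.
  by rewrite (negbTE Haj) (coordD (Pw j) Hwj (Cw j Hwj)).
split.
  by rewrite Ev reorientE submxMr.
by move=> j; rewrite mxE rpredD // natr_int.
Qed.

Definition vrowz (e : 'I_n) (z : 'I_n -> nat) : 'rV[R]_n :=
  \row_(j < n) ((j == e)%:R + (z j)%:R).

Lemma cac_cov (o : oriented_sub n) : coherent_acyclic M o ->
  exists a, (a <= M)%MS /\ signpat a = o.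
Proof.
move=> Hc.
pose P (e : 'I_n) (z : 'I_n -> nat) := o e != None ->
  (forall f, o f = None -> z f = 0%N) /\
  (vrowz e z <= reorient M o)%MS.
have Hex : forall e, exists z, P e z.
  move=> e; case: (boolP (o e != None)) => He.
    have [z [Hz [Hv _]]] := Hc e He; by exists z.
  by exists (fun _ => 0%N) => H; rewrite H in He.
have [Z HZ] := choice Hex.
pose vr e : 'rV[R]_n := \row_(j < n) ((j == e)%:R + (Z e j)%:R : R).
set u := \sum_(e | o e != None) vr e.
have Su : (u <= reorient M o)%MS.
  by apply: summx_sub => e He; have [_ H] := HZ e He.
have Eu : forall j, u 0 j = \sum_(e | o e != None) ((j == e)%:R + (Z e j)%:R).
  by move=> j; rewrite summxE; apply: eq_bigr => e _; rewrite mxE.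
have Hu0 : forall j, o j = None -> u 0 j = 0.
  move=> j Hj; rewrite Eu big1 // => e He.
  have [Hz _] := HZ e He.
  rewrite Hz //; have -> : (j == e) = false.
    by apply/negP => /eqP E; rewrite -E Hj in He.
  by rewrite addr0.
have Hu1 : forall j, o j != None -> 0 < u 0 j.
  move=> j Hj; rewrite Eu (bigD1 j) //= eqxx.
  apply: (lt_le_trans (y := 1 + (Z j j)%:R)).
    by rewrite ltr_pwDl // ler0n.
  rewrite lerDl sumr_ge0 // => e _; rewrite addr_ge0 ?ler0n //.
exists (u *m diag_mx (dvec o)); split.
  by rewrite -(reorientK o) submxMr.
apply/ffunP => j; rewrite ffunE mul_mx_diag mxE mxE.
case: (eqVneq (o j) None) => [Hj|Hj].
  by rewrite Hj Hu0 // mul0r eqxx.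
have Hp := Hu1 j Hj.
case E : (o j) => [b|]; last by rewrite E in Hj.
rewrite /sgn; case: b E => E.
  by rewrite mulr1 (gt_eqF Hp) Hp.
rewrite mulrN1 oppr_eq0 (gt_eqF Hp) oppr_gt0.
by rewrite (lt_gtF Hp).
Qed.

Lemma face_char (F : set 'rV[R]_n) : is_face (voronoi_cell M) F ->
  exists a, (a <= M)%MS /\ F = faceset a.
Proof.
move=> [[x Fx] [a0 [b [Hsup EF]]]].
have [a [Ha Hk]] := proj_ex a0.
have Hdot : forall z, voronoi_cell M z -> dotv a0 z = dotv a z.
  move=> z [Hz _]; have := orth_ker Hz Hk.
  by rewrite dotvBr (dotvC z a0) (dotvC z a) => /eqP; rewrite subr_eq0 => /eqP.
have Hb : b = l1 a / 2.
  rewrite EF in Fx; case: Fx => Vx Hx.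
  apply/eqP; rewrite eq_le; apply/andP; split.
    by rewrite -Hx Hdot // B_any.
  have [p [Vp Hp]] := pt_ex a a.
  by rewrite -(ypt_dot a a) -Hp // -Hdot //; apply: Hsup.
exists a; split => //; rewrite EF Hb.
apply/seteqP; split => z [Vz Hz]; split => //.
  by rewrite -Hdot.
by rewrite Hdot.
Qed.

Lemma face_of a : (a <= M)%MS -> is_face (voronoi_cell M) (faceset a).
Proof.
move=> Ha; split.
  have [p [Vp Hp]] := pt_ex a a; exists p; split => //.
  by rewrite Hp // ypt_dot.
exists a, (l1 a / 2); split => //.
by move=> x Vx; apply: B_any.
Qed.

Lemma cac_le_refl (o : oriented_sub n) : cac_le o o.
Proof. by []. Qed.

Lemma cac_le_anti (o o' : oriented_sub n) : cac_le o o' -> cac_le o' o -> o = o'.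
Proof.
move=> H1 H2; apply/ffunP => e.
case: (eqVneq (o' e) None) => [He|He]; last by rewrite H1.
case: (eqVneq (o e) None) => [He'|He']; last by rewrite H2.
by rewrite He He'.
Qed.

Lemma sig_eq (T : Type) (P : T -> Prop) (x y : {t | P t}) : sval x = sval y -> x = y.
Proof.
case: x y => [x Hx] [y Hy] /= E; subst y.
by congr exist; apply: Prop_irrelevance.
Qed.

Lemma main_sec : exists phi : face_poset M -> CAC M,
    bijective phi /\
    forall F G : face_poset M,
      (sval F `<=` sval G) <-> cac_le (sval (phi F)) (sval (phi G)).
Proof.
pose Rel (F : face_poset M) (o : CAC M) :=
  exists a, [/\ (a <= M)%MS, signpat a = sval o & sval F = faceset a].
have tot : forall F, exists o, Rel F o.
  move=> F; have [a [Ha EF]] := face_char (svalP F).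
  by exists (exist _ (signpat a) (cov_cac Ha)), a.
have [phi Hphi] := choice tot.
have ord : forall F G, (sval F `<=` sval G) <-> cac_le (sval (phi F)) (sval (phi G)).
  move=> F G; have [a [Ha Ea EF]] := Hphi F; have [b [Hb Eb EG]] := Hphi G.
  by rewrite EF EG -Ea -Eb; apply: faceO.
have inj : injective phi.
  move=> F G E.
  have h1 : sval F `<=` sval G by apply/ord; rewrite E.
  have h2 : sval G `<=` sval F by apply/ord; rewrite E.
  have Es : sval F = sval G by apply/seteqP; split.
  exact: sig_eq.
have surj : forall o, exists F, phi F = o.
  move=> o; have [a [Ha Ea]] := cac_cov (svalP o).
  exists (exist _ (faceset a) (face_of Ha)).
  have [b [Hb Eb EF]] := Hphi (exist _ (faceset a) (face_of Ha)).
  move: EF => /= EF.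
  have h1 : cac_le (signpat a) (signpat b) by apply/faceO => //; rewrite EF.
  have h2 : cac_le (signpat b) (signpat a) by apply/faceO => //; rewrite EF.
  have := cac_le_anti h1 h2; rewrite Ea Eb => E.
  by apply: sig_eq.
have [g Hg] := choice surj.
exists phi; split => //.
by exists g => [F|o]; [apply: inj; rewrite Hg | apply: Hg].
Qed.

End Main.

Unset Implicit Arguments.
Theorem mainTheorem2 (R : realType) (m n : nat) (M : 'M[R]_(m, n))
    (HTU : totally_unimodular M) :
  exists phi : face_poset M -> CAC M,
    bijective phi /\
    forall F G : face_poset M,
      (sval F `<=` sval G) <-> cac_le (sval (phi F)) (sval (phi G)).
Proof. exact: main_sec HTU. Qed.
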